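(* Let $G=G_1\times G_2$ be a product of commutative groups, $1<p<\infty$, and $f$ a nonnegative function in $\ell^1(G)$. For $x\in G_1$ define $f_x(y)=f(x,y)$, a function on $G_2$, and let $g(x)=\gamma_p(f_x)$ (computed in $G_2$), a function on $G_1$. Then $\gamma_p(f)\ge\gamma_p(g)$, where $\gamma_p(g)$ is computed in $G_1$.
   Context: For nonnegative functions $f,g$ on a commutative group $K$, $(f\star g)(x)=\max_t f(t)g(x-t)$. For nonnegative $f\in\ell^1(K)$ and $1/p+1/q=1$, $\gamma_p(f)=\inf_{g,h}\frac{\|f\star g\star h\|_1}{\|g\|_p\|h\|_q}$, infimum over nonzero nonnegative $g,h\in\ell^1(K)$. *)

(* Defs.v *)
From HB Require Import structures.
From mathcomp Require Import all_boot all_order all_algebra.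
From mathcomp Require Import all_classical all_reals all_analysis.
Set Implicit Arguments. Unset Strict Implicit. Unset Printing Implicit Defensive.
Import Order.TTheory GRing.Theory Num.Theory.
Local Open Scope classical_set_scope.
Local Open Scope ring_scope.

Section Defs.
Context {R : realType} {K : zmodType}.

Definition nonneg (f : K -> R) : Prop := forall x, 0 <= f x.

Definition ell1 (f : K -> R) : Prop := (\esum_(x in [set: K]) `|f x|%:E < +oo)%E.

Definition norm1 (f : K -> R) : R := fine (\esum_(x in [set: K]) `|f x|%:E).

Definition lpnorm (p : R) (f : K -> R) : R :=
  (fine (\esum_(x in [set: K]) (`|f x| `^ p)%:E)) `^ p^-1.

(* max-convolution (f * g)(x) = max_t f(t) g(x - t) (supremum, attained for l^1 nonneg f,g) *)
Definition maxconv (f g : K -> R) : K -> R :=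
  fun x => sup [set f t * g (x - t) | t in [set: K]].

Definition conj_exp (p : R) : R := p / (p - 1).

Definition gamma (p : R) (f : K -> R) : \bar R :=
  ereal_inf [set r : \bar R | exists (g h : K -> R),
     [/\ nonneg g /\ ell1 g /\ g <> (fun _ => 0),
         nonneg h /\ ell1 h /\ h <> (fun _ => 0) &
         r = (norm1 (maxconv (maxconv f g) h) /
               (lpnorm p g * lpnorm (conj_exp p) h))%:E]].

End Defs.

(* Main.v *)
Require Import Defs.
From HB Require Import structures.
From mathcomp Require Import all_boot all_order all_algebra.
From mathcomp Require Import all_classical all_reals all_analysis.
Import Order.TTheory GRing.Theory Num.Theory.
Local Open Scope classical_set_scope.
Local Open Scope ring_scope.

Section Gen.
Context {R : realType}.

Lemma le_fine (x y : \bar R) : (0 <= x)%E -> (x <= y)%E -> (y < +oo)%E ->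
  fine x <= fine y.
Proof.
move=> x0 xy yoo.
have fy : y \is a fin_num by rewrite ge0_fin_numE// (le_trans x0).
have fx : x \is a fin_num by rewrite ge0_fin_numE// (le_lt_trans xy).
by rewrite -lee_fin !fineK.
Qed.

Lemma fine_le_r (x : \bar R) (r : R) : (x <= r%:E)%E -> 0 <= r -> fine x <= r.
Proof. by case: x => //= x; rewrite lee_fin. Qed.

Lemma esum_term {T : choiceType} (a : T -> \bar R) x :
  (forall i, 0 <= a i)%E -> (a x <= \esum_(i in [set: T]) a i)%E.
Proof.
move=> a0; apply: esum_ge; exists [set x]; first by split => //; exact: finite_set1.
by rewrite fsbig_set1.
Qed.

Lemma esumZ_le {T : choiceType} (c : R) (a : T -> R) : 0 <= c ->
  (forall i, 0 <= a i) ->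
  (\esum_(i in [set: T]) (c * a i)%:E <= c%:E * \esum_(i in [set: T]) (a i)%:E)%E.
Proof.
move=> c0 a0; apply: ge_ereal_sup => _ [X [finX _] <-].
rewrite (fsbig_finite _ _ finX).
under eq_bigr do rewrite EFinM.
rewrite -ge0_sume_distrr; last by move=> i _; rewrite lee_fin.
apply: lee_wpmul2l; first by rewrite lee_fin.
apply: ereal_sup_ubound; exists X => //.
by rewrite (fsbig_finite _ _ finX).
Qed.

Lemma esum_fubini {T1 T2 : choiceType} (F : T1 * T2 -> \bar R) :
  (forall z, 0 <= F z)%E ->
  \esum_(z in [set: T1 * T2]) F z =
  \esum_(a in [set: T1]) \esum_(b in [set: T2]) F (a, b).
Proof.
move=> F0; rewrite esum_esum//.
have -> : [set: T1] `*`` (fun=> [set: T2]) = [set: T1 * T2].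
  by apply/seteqP; split => -[].
by apply: eq_esum => -[].
Qed.

Lemma esum_swap {T1 T2 : choiceType} (F : T1 -> T2 -> \bar R) :
  (forall a b, 0 <= F a b)%E ->
  \esum_(a in [set: T1]) \esum_(b in [set: T2]) F a b =
  \esum_(b in [set: T2]) \esum_(a in [set: T1]) F a b.
Proof.
move=> F0.
rewrite -(esum_fubini (fun z => F z.1 z.2)); last by move=> *.
rewrite -(esum_fubini (fun z => F z.2 z.1)); last by move=> *.
rewrite (reindex_esum [set: T2 * T1] [set: T1 * T2] (fun z => (z.2, z.1))) //.
split=> //; first by move=> [? ?] [? ?] _ _ [-> ->].
by move=> [a b] _; exists (b, a).
Qed.

Lemma esum_transl {K : zmodType} (a : K -> \bar R) (u : K) :
  \esum_(z in [set: K]) a (z - u) = \esum_(z in [set: K]) a z.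
Proof.
rewrite [RHS](reindex_esum [set: K] [set: K] (fun z => z - u)) //.
split=> //; first by move=> x y _ _ /addIr.
by move=> z _; exists (z + u) => //; rewrite addrK.
Qed.


Section Conv.
Context {K : zmodType}.
Implicit Types (F H a : K -> R).

Lemma mc_ub F H z t M : (forall t, F t * H (z - t) <= M) ->
  F t * H (z - t) <= maxconv F H z.
Proof.
move=> hM; rewrite /maxconv.
have ub : has_ubound [set F t * H (z - t) | t in [set: K]].
  by exists M => _ [t' _ <-]; apply: hM.
by apply: (ub_le_sup ub); exists t.
Qed.

Lemma mc_le F H z c : (forall t, F t * H (z - t) <= c) -> maxconv F H z <= c.
Proof.
move=> hc; apply: ge_sup; first by exists (F 0 * H (z - 0)), 0.
by move=> _ [t _ <-]; apply: hc.
Qed.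

Lemma mc_ge0 F H z : nonneg F -> nonneg H -> 0 <= maxconv F H z.
Proof.
move=> F0 H0; rewrite /maxconv.
case: (pselect (has_sup [set F t * H (z - t) | t in [set: K]])) => hs; last first.
  by rewrite sup_out.
have /ubP h := sup_upper_bound hs.
apply: le_trans (h (F 0 * H (z - 0)) _); last by exists 0.
by rewrite mulr_ge0.
Qed.

Lemma mc_nonneg F H : nonneg F -> nonneg H -> nonneg (maxconv F H).
Proof. by move=> F0 H0 z; apply: mc_ge0. Qed.

Lemma norm1_ge0 F : 0 <= norm1 F.
Proof. by apply: fine_ge0; apply: esum_ge0 => *; rewrite lee_fin. Qed.

Lemma esum_norm1 F : nonneg F -> ell1 F ->
  \esum_(z in [set: K]) (F z)%:E = (norm1 F)%:E.
Proof.
move=> F0 F1; rewrite /norm1 fineK; last first.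
  by rewrite ge0_fin_numE//; apply: esum_ge0 => *; rewrite lee_fin.
by apply: eq_esum => z _; rewrite ger0_norm.
Qed.

Lemma bnd_ell1 F : nonneg F -> ell1 F -> forall t, F t <= norm1 F.
Proof.
move=> F0 F1 t; rewrite -lee_fin -esum_norm1//.
by apply: (esum_term (fun i => (F i)%:E)) => i; rewrite lee_fin.
Qed.

Lemma mc_bnd F H A B : nonneg F -> nonneg H -> (forall t, F t <= A) ->
  (forall t, H t <= B) -> forall z t, F t * H (z - t) <= A * B.
Proof. by move=> F0 H0 FA HB z t; apply: ler_pM. Qed.

Lemma mc_ell1_le F H : nonneg F -> nonneg H -> ell1 F -> ell1 H ->
  (\esum_(z in [set: K]) (`|maxconv F H z|)%:E <= (norm1 F * norm1 H)%:E)%E.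
Proof.
move=> F0 H0 F1 H1.
have e1 : forall z, ((`|maxconv F H z|)%:E <=
    \esum_(u in [set: K]) (F u * H (z - u))%:E)%E.
  move=> z; rewrite ger0_norm ?mc_ge0//.
  set E := esum _ _.
  have E0 : (0 <= E)%E by apply: esum_ge0 => *; rewrite lee_fin mulr_ge0.
  case: (boolP (E \is a fin_num)) => fE; last first.
    move: fE; rewrite ge0_fin_numE// lt_neqAle leey andbT negbK => /eqP ->.
    exact: leey.
  rewrite -(fineK fE) lee_fin; apply: mc_le => t; rewrite -lee_fin fineK //.
  by apply: (esum_term (fun u => (F u * H (z - u))%:E)) => i; rewrite lee_fin mulr_ge0.
apply: le_trans (le_esum (fun z _ => e1 z)) _.
rewrite esum_swap; last by move=> *; rewrite lee_fin mulr_ge0.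
have e2 : forall u, (\esum_(z in [set: K]) (F u * H (z - u))%:E <=
    (norm1 H * F u)%:E)%E.
  move=> u; apply: le_trans (esumZ_le _ _ _ _) _ => //.
  rewrite (esum_transl (fun z => (H z)%:E)) esum_norm1// -EFinM mulrC.
  done.
apply: le_trans (le_esum (fun u _ => e2 u)) _.
apply: le_trans (esumZ_le _ _ _ _) _ => //; first exact: norm1_ge0.
by rewrite esum_norm1// -EFinM mulrC.
Qed.

Lemma mc_ell1 F H : nonneg F -> nonneg H -> ell1 F -> ell1 H ->
  ell1 (maxconv F H).
Proof.
move=> F0 H0 F1 H1; rewrite /ell1.
have := mc_ell1_le F H F0 H0 F1 H1; move/le_lt_trans; apply; exact: ltry.
Qed.

End Conv.
End Gen.

Section Lp.
Context {R : realType} {K : zmodType}.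
Implicit Types (a : K -> R).

Lemma lp_le1 a r : 1 <= r -> nonneg a -> ell1 a ->
  (\esum_(x in [set: K]) (`|a x| `^ r)%:E <= (norm1 a `^ r)%:E)%E.
Proof.
move=> r1 a0 a1.
have r0 : 0 < r by apply: lt_le_trans r1.
have T0 := norm1_ge0 a.
have e1 : forall x, ((`|a x| `^ r)%:E <= (norm1 a `^ (r - 1) * a x)%:E)%E.
  move=> x; rewrite lee_fin ger0_norm // -mulr_powRB1 // mulrC.
  apply: ler_wpM2r => //; apply: ge0_ler_powR; rewrite ?subr_ge0 ?nnegrE //.
  exact: bnd_ell1.
apply: le_trans (le_esum (fun x _ => e1 x)) _.
apply: le_trans (esumZ_le _ _ _ _) _ => //; first exact: powR_ge0.
by rewrite esum_norm1 // -EFinM lee_fin mulrC mulr_powRB1.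
Qed.

Lemma lp_fin a r : 1 <= r -> nonneg a -> ell1 a ->
  (\esum_(x in [set: K]) (`|a x| `^ r)%:E \is a fin_num).
Proof.
move=> r1 a0 a1; rewrite ge0_fin_numE; last by apply: esum_ge0 => *; rewrite lee_fin powR_ge0.
by apply: le_lt_trans (@lp_le1 a r r1 a0 a1) _; rewrite ltry.
Qed.

Lemma lpnorm_ge0 a r : 0 <= lpnorm r a.
Proof. exact: powR_ge0. Qed.

Lemma lpnorm_le a r : 1 <= r -> nonneg a -> ell1 a -> lpnorm r a <= norm1 a.
Proof.
move=> r1 a0 a1.
have r0 : 0 < r by apply: lt_le_trans r1.
have T0 := norm1_ge0 a.
have h : fine (\esum_(x in [set: K]) (`|a x| `^ r)%:E) <= norm1 a `^ r.
  by apply: fine_le_r; [exact: lp_le1|exact: powR_ge0].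
rewrite /lpnorm; apply: le_trans (ge0_ler_powR _ _ _ h) _.
- by rewrite invr_ge0 ltW.
- by rewrite nnegrE fine_ge0 //; apply: esum_ge0 => *; rewrite lee_fin powR_ge0.
- by rewrite nnegrE powR_ge0.
by rewrite -powRrM mulfV ?gt_eqF // powRr1.
Qed.

Lemma lpnorm_gt0 a r : 1 <= r -> nonneg a -> ell1 a -> a <> (fun _ => 0) ->
  0 < lpnorm r a.
Proof.
move=> r1 a0 a1 anz.
have r0 : 0 < r by apply: lt_le_trans r1.
case: (pselect (exists x, a x != 0)) => [[x ax]|nex]; last first.
  exfalso; apply: anz; apply: funext => x; apply/eqP; apply/negPn/negP => ax.
  by apply: nex; exists x.
have ax0 : 0 < a x by rewrite lt_neqAle eq_sym ax a0.
apply: powR_gt0; rewrite -lte_fin fineK; last exact: lp_fin.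
apply: lt_le_trans (esum_term (fun i => (`|a i| `^ r)%:E) x _).
  by rewrite lte_fin powR_gt0 // normr_gt0 gt_eqF.
by move=> i; rewrite lee_fin powR_ge0.
Qed.

Lemma lpnorm0 (r : R) : r != 0 -> lpnorm r (fun _ : K => 0) = 0.
Proof.
move=> r0; rewrite /lpnorm.
have -> : \esum_(x in [set: K]) (`|(fun _ : K => 0 : R) x| `^ r)%:E = 0%E.
  by apply: esum1 => i _; rewrite normr0 powR0.
by rewrite /= powR0 // invr_eq0.
Qed.

End Lp.

Section Prod.
Context {R : realType} {G1 G2 : zmodType}.
Implicit Types (F : G1 * G2 -> R).

Lemma sl_esum_le (A : G1 * G2 -> \bar R) x : (forall z, 0 <= A z)%E ->
  (\esum_(y in [set: G2]) A (x, y) <= \esum_(z in [set: G1 * G2]) A z)%E.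
Proof.
move=> A0; rewrite esum_fubini //.
apply: (esum_term (fun x => \esum_(y in [set: G2]) A (x, y))) => i.
by apply: esum_ge0.
Qed.

Lemma sl_ell1 F x : ell1 F -> ell1 (fun y => F (x, y)).
Proof.
move=> F1; rewrite /ell1.
apply: le_lt_trans F1.
by apply: (sl_esum_le (fun z => (`|F z|)%:E)) => z; rewrite lee_fin.
Qed.

Lemma sl_nonneg F x : nonneg F -> nonneg (fun y => F (x, y)).
Proof. by move=> F0 y. Qed.

Lemma lpslice_ell1 F r : 1 <= r -> nonneg F -> ell1 F ->
  ell1 (fun x => lpnorm r (fun y => F (x, y))).
Proof.
move=> r1 F0 F1; rewrite /ell1.
have e1 : forall x, ((`|lpnorm r (fun y => F (x, y))|)%:E <=
    \esum_(y in [set: G2]) (`|F (x, y)|)%:E)%E.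
  move=> x; rewrite ger0_norm ?lpnorm_ge0 //.
  apply: le_trans (_ : (norm1 (fun y => F (x, y)))%:E <= _)%E.
    by rewrite lee_fin; apply: lpnorm_le; [done|exact: sl_nonneg|exact: sl_ell1].
  rewrite /norm1 fineK //.
  rewrite ge0_fin_numE; last by apply: esum_ge0 => *; rewrite lee_fin.
  exact: (sl_ell1 F x F1).
apply: le_lt_trans (le_esum (fun x _ => e1 x)) _.
by rewrite -(esum_fubini (fun z => (`|F z|)%:E)) // => z; rewrite lee_fin.
Qed.

Lemma lpslice_eq F r : 1 <= r -> nonneg F -> ell1 F ->
  lpnorm r (fun x => lpnorm r (fun y => F (x, y))) = lpnorm r F.
Proof.
move=> r1 F0 F1.
have r0 : 0 < r by apply: lt_le_trans r1.
rewrite /lpnorm; congr (fine _ `^ _).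
have e1 : forall x, (`|lpnorm r (fun y => F (x, y))| `^ r)%:E =
    \esum_(y in [set: G2]) (`|F (x, y)| `^ r)%:E.
  move=> x; rewrite ger0_norm ?lpnorm_ge0 // /lpnorm -powRrM mulVf ?gt_eqF //.
  rewrite powRr1; last by apply: fine_ge0; apply: esum_ge0 => *; rewrite lee_fin powR_ge0.
  rewrite fineK // ge0_fin_numE; last by apply: esum_ge0 => *; rewrite lee_fin powR_ge0.
  apply: le_lt_trans (sl_esum_le (fun z => (`|F z| `^ r)%:E) x _) _.
    by move=> z; rewrite lee_fin powR_ge0.
  by rewrite -ge0_fin_numE ?lp_fin //; apply: esum_ge0 => *; rewrite lee_fin powR_ge0.
rewrite (eq_esum (fun x _ => e1 x)).
by rewrite -(esum_fubini (fun z => (`|F z| `^ r)%:E)) // => z; rewrite lee_fin powR_ge0.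
Qed.

Lemma lpslice_nz F r : 1 <= r -> nonneg F -> ell1 F -> F <> (fun _ => 0) ->
  (fun x => lpnorm r (fun y => F (x, y))) <> (fun _ => 0).
Proof.
move=> r1 F0 F1 Fnz.
case: (pselect (exists z, F z != 0)) => [[[x y] Fz]|nex]; last first.
  exfalso; apply: Fnz; apply: funext => z; apply/eqP; apply/negPn/negP => Fz.
  by apply: nex; exists z.
have : 0 < lpnorm r (fun y => F (x, y)).
  apply: lpnorm_gt0; [done|exact: (sl_nonneg F x F0)|exact: (sl_ell1 F x F1)|].
  by move=> /(congr1 (fun h => h y)) /= /eqP; rewrite (negPf Fz).
by move=> pos /(congr1 (fun h => h x)) /= h0; rewrite h0 ltxx in pos.
Qed.

End Prod.

Section Gam.
Context {R : realType}.

Lemma gamma_le {K : zmodType} (p : R) (F g h : K -> R) :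
  nonneg g -> ell1 g -> g <> (fun _ => 0) ->
  nonneg h -> ell1 h -> h <> (fun _ => 0) ->
  fine (gamma p F) <= norm1 (maxconv (maxconv F g) h) /
    (lpnorm p g * lpnorm (conj_exp p) h).
Proof.
move=> g0 g1 gnz h0 h1 hnz; apply: fine_le_r.
  by apply: ereal_inf_lbound; exists g, h; split.
by rewrite divr_ge0 ?norm1_ge0 // mulr_ge0 // lpnorm_ge0.
Qed.

Lemma gamma_ge0 {K : zmodType} (p : R) (F : K -> R) : 0 <= fine (gamma p F).
Proof.
apply: fine_ge0; apply/ereal_infP => _ [g [h [_ _ ->]]].
by rewrite lee_fin divr_ge0 ?norm1_ge0 // mulr_ge0 // lpnorm_ge0.
Qed.

End Gam.

Theorem mainTheorem13 (R : realType) (G1 G2 : zmodType) (p : R)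
  (f : G1 * G2 -> R) :
  1 < p -> nonneg f -> ell1 f ->
  (gamma p (fun x : G1 => fine (gamma p (fun y : G2 => f (x, y))))
     <= gamma p f)%E.
Proof.
move=> p1' f0 f1.
have p1 : 1 <= p by apply: ltW.
have p0 : p != 0 by rewrite gt_eqF // (lt_trans ltr01).
set q := conj_exp p.
have q1 : 1 <= q.
  rewrite /q /conj_exp ler_pdivlMr ?subr_gt0 // mul1r.
  by rewrite lerBlDr lerDl ler01.
have q0 : q != 0 by rewrite gt_eqF // (lt_le_trans ltr01).
set gt := fun x : G1 => fine (gamma p (fun y : G2 => f (x, y))).
apply/ereal_infP => _ [g [h [[g0 [g1 gnz]] [h0 [h1 hnz]] ->]]].
set G1f := fun x => lpnorm p (fun y => g (x, y)).
set H1f := fun x => lpnorm q (fun y => h (x, y)).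
apply: ge_ereal_inf.
exists (norm1 (maxconv (maxconv gt G1f) H1f) / (lpnorm p G1f * lpnorm q H1f))%:E.
  exists G1f, H1f; split => //.
    split; first by move=> x; exact: lpnorm_ge0.
    by split; [exact: lpslice_ell1|exact: lpslice_nz].
  split; first by move=> x; exact: lpnorm_ge0.
  by split; [exact: lpslice_ell1|exact: lpslice_nz].
rewrite /G1f /H1f lpslice_eq // lpslice_eq // lee_fin.
apply: ler_wpM2r; first by rewrite invr_ge0 mulr_ge0 // lpnorm_ge0.
set A := maxconv (maxconv f g) h.
have fg0 : nonneg (maxconv f g) by apply: mc_nonneg.
have A0 : nonneg A by apply: mc_nonneg.
have A1 : ell1 A by apply: mc_ell1 => //; apply: mc_ell1.
have hMfg : forall z t, f t * g (z - t) <= norm1 f * norm1 g.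
  by apply: mc_bnd => //; apply: bnd_ell1.
have fgB : forall t, maxconv f g t <= norm1 f * norm1 g.
  by move=> t; apply: mc_le => s; apply: hMfg.
have hMA : forall z t, maxconv f g t * h (z - t) <= norm1 f * norm1 g * norm1 h.
  by apply: mc_bnd => //; apply: bnd_ell1.
pose EA := fun a : G1 => \esum_(b in [set: G2]) (A (a, b))%:E.
have EA0 : forall a, (0 <= EA a)%E by move=> a; apply: esum_ge0 => *; rewrite lee_fin.
have EAoo : forall a, (EA a < +oo)%E.
  move=> a; apply: le_lt_trans (sl_esum_le (fun z => (A z)%:E) a _) _.
    by move=> z; rewrite lee_fin.
  by rewrite esum_norm1 // ltry.
have core : forall a u x, gt x * G1f (u - x) * H1f (a - u) <= fine (EA a).
  move=> a u x.
  have e0 : 0 <= fine (EA a) by apply: fine_ge0.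
  have [gz|gnz'] := eqVneq (G1f (u - x)) 0; first by rewrite gz mulr0 mul0r.
  have [hz|hnz'] := eqVneq (H1f (a - u)) 0; first by rewrite hz mulr0.
  have gsnz : (fun y => g (u - x, y)) <> (fun _ => 0).
    by move=> e; move: gnz'; rewrite /G1f e lpnorm0 ?eqxx.
  have hsnz : (fun y => h (a - u, y)) <> (fun _ => 0).
    by move=> e; move: hnz'; rewrite /H1f e lpnorm0 ?eqxx.
  have Gp : 0 < G1f (u - x) by rewrite lt_neqAle eq_sym gnz' lpnorm_ge0.
  have Hp : 0 < H1f (a - u) by rewrite lt_neqAle eq_sym hnz' lpnorm_ge0.
  have gam := gamma_le p (fun y => f (x, y)) _ _ (sl_nonneg g (u - x) g0)
    (sl_ell1 g (u - x) g1) gsnz (sl_nonneg h (a - u) h0) (sl_ell1 h (a - u) h1) hsnz.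
  pose M := maxconv (maxconv (fun y => f (x, y)) (fun y => g (u - x, y)))
    (fun y => h (a - u, y)).
  have key : gt x * (G1f (u - x) * H1f (a - u)) <= norm1 M.
    have eqD : G1f (u - x) * H1f (a - u) = lpnorm p (fun y => g (u - x, y)) *
      lpnorm (conj_exp p) (fun y => h (a - u, y)).
      reflexivity.
    have DP : 0 < G1f (u - x) * H1f (a - u) by exact: (mulr_gt0 Gp Hp).
    rewrite -(ler_pdivlMr _ _ DP) eqD; exact: gam.
  rewrite -mulrA; apply: le_trans key _.
  rewrite /norm1; apply: le_fine; [by apply: esum_ge0 => *; rewrite lee_fin| |exact: EAoo].
  apply: le_esum => b _.
  have M0 : 0 <= M b.
    apply: mc_ge0; last exact: (sl_nonneg h (a - u) h0).
    apply: mc_nonneg; [exact: (sl_nonneg f x f0)|exact: (sl_nonneg g (u - x) g0)].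
  rewrite ger0_norm // lee_fin.
  apply: mc_le => v.
  have hA := mc_ub (maxconv f g) h (a, b) (u, v) _ (hMA (a, b)).
  apply: le_trans hA.
  change (h ((a, b) - (u, v))) with (h (a - u, b - v)).
  apply: ler_wpM2r; first exact: h0.
  apply: mc_le => w.
  have hF := mc_ub f g (u, v) (x, w) _ (hMfg (u, v)).
  change (g ((u, v) - (x, w))) with (g (u - x, v - w)) in hF.
  exact: hF.
have pw : forall a, maxconv (maxconv gt G1f) H1f a <= fine (EA a).
  move=> a; apply: mc_le => u.
  have e0 : 0 <= fine (EA a) by apply: fine_ge0.
  have [hz|hnz'] := eqVneq (H1f (a - u)) 0; first by rewrite hz mulr0.
  have Hp : 0 < H1f (a - u) by rewrite lt_neqAle eq_sym hnz' lpnorm_ge0.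
  rewrite -ler_pdivlMr //; apply: mc_le => x; rewrite ler_pdivlMr //; exact: core.
have gt0 : nonneg gt by move=> x; apply: gamma_ge0.
have G0 : nonneg G1f by move=> x; apply: lpnorm_ge0.
have H0 : nonneg H1f by move=> x; apply: lpnorm_ge0.
have eqA : \esum_(a in [set: G1]) EA a = (norm1 A)%:E.
  by rewrite -esum_norm1 // -(esum_fubini (fun z => (A z)%:E)) // => z; rewrite lee_fin.
have eqAoo : (\esum_(a in [set: G1]) EA a < +oo)%E by rewrite eqA ltry.
apply: (@le_trans _ _ (fine (\esum_(a in [set: G1]) EA a))); last by rewrite eqA.
rewrite /norm1; apply: le_fine.
- by apply: esum_ge0 => *; rewrite lee_fin.
- apply: le_esum => a _.
  have B0 : 0 <= maxconv (maxconv gt G1f) H1f a.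
    by apply: mc_ge0 => //; apply: mc_nonneg.
  rewrite ger0_norm //.
  by rewrite -(fineK (_ : EA a \is a fin_num)) ?lee_fin ?pw // ge0_fin_numE.
- exact: eqAoo.
Qed.
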